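(* Let $(X,\mathbb T,\pi)$ be a dynamical system on a complete metric space $(X,\rho)$ and $x\in X$. Assume (1) there is $\tau\in\mathbb T$, $\tau>0$, with $\lim_{t\to+\infty}\rho(\pi(t+\tau,x),\pi(t,x))=0$; (2) $x$ is positively asymptotically Poisson stable. Then $x$ is asymptotically $\tau$-periodic.
   Context: $\mathbb T$ is $\mathbb R_+$ or $\mathbb Z_+$; a dynamical system is a continuous $\pi:\mathbb T\times X\to X$ with $\pi(0,x)=x$, $\pi(t+s,x)=\pi(t,\pi(s,x))$. $\omega_x$ is the set of limits of $\pi(t_k,x)$ with $t_k\to+\infty$. A point $p$ is positively Poisson stable if $p\in\omega_p$; $x$ is positively asymptotically Poisson stable if there is a positively Poisson stable $p$ with $\rho(\pi(t,x),\pi(t,p))\to0$ as $t\to+\infty$. A point $p$ is $\tau$-periodic if $\pi(\tau,p)=p$; $x$ is asymptotically $\tau$-periodic if there is a $\tau$-periodic $p$ with $\lim_{t\to\infty}\rho(\pi(t,x),\pi(t,p))=0$. *)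

(* Defs.v *)
From Stdlib Require Import Reals.
Open Scope R_scope.

(* Time set T inside R: if [disc] then T = Z_+ (nonnegative integers),
   otherwise T = R_+ (nonnegative reals). *)
Definition inT (disc : bool) (t : R) : Prop :=
  if disc then exists n : nat, t = INR n else 0 <= t.

Definition is_metric {X : Type} (rho : X -> X -> R) : Prop :=
  (forall x y, 0 <= rho x y) /\
  (forall x y, rho x y = 0 <-> x = y) /\
  (forall x y, rho x y = rho y x) /\
  (forall x y z, rho x z <= rho x y + rho y z).

Definition seq_cauchy {X : Type} (rho : X -> X -> R) (u : nat -> X) : Prop :=
  forall eps, 0 < eps -> exists N, forall n m, (N <= n)%nat -> (N <= m)%nat ->
    rho (u n) (u m) < eps.

Definition seq_conv {X : Type} (rho : X -> X -> R) (u : nat -> X) (l : X) : Prop :=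
  forall eps, 0 < eps -> exists N, forall n, (N <= n)%nat -> rho (u n) l < eps.

Definition complete_metric {X : Type} (rho : X -> X -> R) : Prop :=
  forall u : nat -> X, seq_cauchy rho u -> exists l, seq_conv rho u l.

Definition dynamical_system (disc : bool) {X : Type} (rho : X -> X -> R)
  (pi : R -> X -> X) : Prop :=
  (forall x, pi 0 x = x) /\
  (forall t s x, inT disc t -> inT disc s -> pi (t + s) x = pi t (pi s x)) /\
  (forall t x, inT disc t -> forall eps, 0 < eps -> exists delta, 0 < delta /\
     forall t' x', inT disc t' -> Rabs (t' - t) < delta -> rho x' x < delta ->
       rho (pi t' x') (pi t x) < eps).

Definition lim_T_zero (disc : bool) (f : R -> R) : Prop :=
  forall eps, 0 < eps -> exists L, forall t, inT disc t -> L <= t -> Rabs (f t) < eps.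

Definition omega_limit (disc : bool) {X : Type} (rho : X -> X -> R)
  (pi : R -> X -> X) (x : X) (p : X) : Prop :=
  exists tk : nat -> R,
    (forall k, inT disc (tk k)) /\
    (forall M, exists N, forall k, (N <= k)%nat -> M <= tk k) /\
    seq_conv rho (fun k => pi (tk k) x) p.

Definition pos_poisson_stable (disc : bool) {X : Type} (rho : X -> X -> R)
  (pi : R -> X -> X) (p : X) : Prop :=
  omega_limit disc rho pi p p.

Definition pos_asymp_poisson_stable (disc : bool) {X : Type} (rho : X -> X -> R)
  (pi : R -> X -> X) (x : X) : Prop :=
  exists p, pos_poisson_stable disc rho pi p /\
    lim_T_zero disc (fun t => rho (pi t x) (pi t p)).


Definition asymp_periodic (disc : bool) {X : Type} (rho : X -> X -> R)
  (pi : R -> X -> X) (tau : R) (x : X) : Prop :=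
  exists p, pi tau p = p /\ lim_T_zero disc (fun t => rho (pi t x) (pi t p)).

(* Main.v *)
Require Import Defs.
From Stdlib Require Import Reals Lra Lia.
Open Scope R_scope.

Lemma inT_add disc t s : inT disc t -> inT disc s -> inT disc (t + s).
Proof.
  destruct disc; simpl.
  - intros [n Hn] [m Hm]. exists (n + m)%nat. rewrite plus_INR; lra.
  - lra.
Qed.

Lemma inT_nonneg disc t : inT disc t -> 0 <= t.
Proof. destruct disc; simpl; [intros [n ->]; apply pos_INR | auto]. Qed.

Theorem mainTheorem4 (disc : bool) (X : Type) (rho : X -> X -> R)
  (pi : R -> X -> X) (x : X) (tau : R) :
  is_metric rho -> complete_metric rho -> dynamical_system disc rho pi ->
  inT disc tau -> 0 < tau ->
  lim_T_zero disc (fun t => rho (pi (t + tau) x) (pi t x)) ->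
  pos_asymp_poisson_stable disc rho pi x ->
  asymp_periodic disc rho pi tau x.
Proof.
  intros [Hpos [Hzero [Hsym Htri]]] _ [H0 [Hsg Hcont]] Htau Htau0 Hlim
    [p [[tk [Htk [Hinf Hconv]]] Hasym]].
  exists p; split; [|exact Hasym].
  assert (Hp : lim_T_zero disc (fun t => rho (pi (t + tau) p) (pi t p))).
  { intros eps Heps.
    destruct (Hlim (eps/3) ltac:(lra)) as [L1 HL1].
    destruct (Hasym (eps/3) ltac:(lra)) as [L2 HL2].
    exists (Rmax L1 L2). intros t Ht HLt.
    assert (Ht' : inT disc (t + tau)) by (apply inT_add; auto).
    pose proof (HL1 t Ht ltac:(pose proof (Rmax_l L1 L2); lra)) as A.
    pose proof (HL2 t Ht ltac:(pose proof (Rmax_r L1 L2); lra)) as B.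
    pose proof (HL2 (t + tau) Ht' ltac:(pose proof (Rmax_r L1 L2); lra)) as C.
    simpl in A, B, C.
    rewrite Rabs_pos_eq in A by apply Hpos.
    rewrite Rabs_pos_eq in B by apply Hpos.
    rewrite Rabs_pos_eq in C by apply Hpos.
    rewrite Rabs_pos_eq by apply Hpos.
    pose proof (Htri (pi (t + tau) p) (pi (t + tau) x) (pi t p)).
    pose proof (Htri (pi (t + tau) x) (pi t x) (pi t p)).
    pose proof (Hsym (pi (t + tau) p) (pi (t + tau) x)).
    lra. }
  apply Hzero.
  destruct (Rle_lt_dec (rho (pi tau p) p) 0) as [Hle|Hgt].
  { pose proof (Hpos (pi tau p) p); lra. }
  exfalso. set (eps := rho (pi tau p) p) in *.
  destruct (Hcont tau p Htau (eps/3) ltac:(lra)) as [delta [Hd Hdel]].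
  destruct (Hp (eps/3) ltac:(lra)) as [L HL].
  destruct (Hinf L) as [N1 HN1].
  destruct (Hconv (Rmin delta (eps/3)) ltac:(apply Rmin_pos; lra)) as [N2 HN2].
  set (k := Nat.max N1 N2).
  pose proof (HN1 k ltac:(unfold k; lia)) as K1.
  pose proof (HN2 k ltac:(unfold k; lia)) as K2.
  pose proof (Rmin_l delta (eps/3)). pose proof (Rmin_r delta (eps/3)).
  set (y := pi (tk k) p) in *.
  pose proof (Hdel tau y Htau ltac:(rewrite Rminus_diag, Rabs_R0; lra) ltac:(lra)) as D.
  pose proof (HL (tk k) (Htk k) K1) as E. simpl in E.
  rewrite Rabs_pos_eq in E by apply Hpos.
  rewrite Rplus_comm, Hsg in E by auto. fold y in E.
  pose proof (Htri (pi tau p) (pi tau y) p).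
  pose proof (Htri (pi tau y) y p).
  rewrite (Hsym (pi tau y) (pi tau p)) in D.
  unfold eps in *. lra.
Qed.
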